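(* Let $m$ be an even positive integer. Then $$\bigcup_{\gamma\in M_1^m}\Gamma_0(2)^+\gamma=\bigcup_{\gamma\in M_2^m}\Gamma_0(2)^+\gamma w_2.$$
   Context: Matrices are in $GL_2^+(\mathbb{R})$ considered up to sign; $\Gamma_0(2)=\{\begin{bmatrix}a&b\\c&d\end{bmatrix}\in SL_2(\mathbb{Z}): c\equiv0\pmod 2\}$, $w_2=2^{-1/2}\begin{bmatrix}0&-1\\2&0\end{bmatrix}$, $\Gamma_0(2)^+$ is the group generated by $\Gamma_0(2)$ and $w_2$. With integers $x,z>0$, $y$: $M_1^m=\{\begin{bmatrix}x&y\\0&z\end{bmatrix}: xz=m,\ 0\leq y<z,\ \gcd(x,y,z)=1,\ x\text{ odd}\}$, $S_1^m=\{\begin{bmatrix}x&y\\0&z\end{bmatrix}: xz=m,\ 0\leq y<z,\ \gcd(x,y,z)=1,\ z\text{ odd}\}$, $S_2^m=\{2^{-1/2}\begin{bmatrix}x&y\\0&z\end{bmatrix}: xz=2m,\ 0\leq y<z,\ \gcd(x,y,z)=1,\ x,z\text{ even}\}$, $M_2^m=S_1^m\cup S_2^m$. *)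

(* Defs.v *)
From HB Require Import structures.
From mathcomp Require Import all_boot all_order all_algebra.
From mathcomp Require Import reals.
Set Implicit Arguments. Unset Strict Implicit. Unset Printing Implicit Defensive.
Import Order.TTheory GRing.Theory Num.Theory.
Local Open Scope ring_scope.

Definition mx2 {R : realType} (a b c d : R) : 'M[R]_2 :=
  \matrix_(i < 2, j < 2)
    if i == ord0 then (if j == ord0 then a else b) else (if j == ord0 then c else d).

Definition intmx {R : realType} (M : 'M[int]_2) : 'M[R]_2 :=
  \matrix_(i, j) (M i j)%:~R.

Definition inGamma0_2 (M : 'M[int]_2) : Prop :=
  \det M = 1 /\ (2 %| M (lift ord0 ord0) ord0)%Z.

Definition w2 {R : realType} : 'M[R]_2 :=
  (Num.sqrt (2 : R))^-1 *: mx2 0 (-1) 2 0.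

Inductive Gamma0_2plus {R : realType} : 'M[R]_2 -> Prop :=
  | G2p_gamma (M : 'M[int]_2) : inGamma0_2 M -> Gamma0_2plus (intmx M)
  | G2p_w2 : Gamma0_2plus w2
  | G2p_mul g h : Gamma0_2plus g -> Gamma0_2plus h -> Gamma0_2plus (g *m h)
  | G2p_inv g : Gamma0_2plus g -> Gamma0_2plus (invmx g).

Definition ut {R : realType} (x y z : nat) : 'M[R]_2 := mx2 x%:R y%:R 0 z%:R.

Definition gcd3 (x y z : nat) : nat := gcdn (gcdn x y) z.

Definition condM1 (m x y z : nat) : Prop :=
  (0 < x)%N /\ (0 < z)%N /\ (x * z = m)%N /\ (y < z)%N /\ gcd3 x y z = 1%N /\ odd x.
Definition condS1 (m x y z : nat) : Prop :=
  (0 < x)%N /\ (0 < z)%N /\ (x * z = m)%N /\ (y < z)%N /\ gcd3 x y z = 1%N /\ odd z.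
Definition condS2 (m x y z : nat) : Prop :=
  (0 < x)%N /\ (0 < z)%N /\ (x * z = 2 * m)%N /\ (y < z)%N /\ gcd3 x y z = 1%N /\ ~~ odd x /\ ~~ odd z.

Definition inM1 {R : realType} (m : nat) (g : 'M[R]_2) : Prop :=
  exists x y z, condM1 m x y z /\ g = ut x y z.
Definition inS1 {R : realType} (m : nat) (g : 'M[R]_2) : Prop :=
  exists x y z, condS1 m x y z /\ g = ut x y z.
Definition inS2 {R : realType} (m : nat) (g : 'M[R]_2) : Prop :=
  exists x y z, condS2 m x y z /\ g = (Num.sqrt (2 : R))^-1 *: ut x y z.
Definition inM2 {R : realType} (m : nat) (g : 'M[R]_2) : Prop :=
  inS1 m g \/ inS2 m g.

(* Main.v *)
Require Import Defs.
From HB Require Import structures.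
From mathcomp Require Import all_boot all_order all_algebra.
From mathcomp Require Import reals.
From mathcomp Require Import zify ring lra.
Set Implicit Arguments. Unset Strict Implicit. Unset Printing Implicit Defensive.
Import Order.TTheory GRing.Theory Num.Theory.
Local Open Scope ring_scope.

Definition gmx2 {T : Type} (a b c d : T) : 'M[T]_2 :=
  \matrix_(i < 2, j < 2)
    if i == ord0 then (if j == ord0 then a else b) else (if j == ord0 then c else d).

Lemma gmx2E {T : Type} (M : 'M[T]_2) :
  M = gmx2 (M ord0 ord0) (M ord0 (lift ord0 ord0)) (M (lift ord0 ord0) ord0) (M (lift ord0 ord0) (lift ord0 ord0)).
Proof.
apply/matrixP => i j; rewrite !mxE.
by case: i => [[|[|i]] Hi]; case: j => [[|[|j]] Hj] //=; congr (M _ _); apply: val_inj.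
Qed.

Lemma gmx2M (T : pzRingType) (a b c d a' b' c' d' : T) :
  gmx2 a b c d *m gmx2 a' b' c' d' =
  gmx2 (a*a'+b*c') (a*b'+b*d') (c*a'+d*c') (c*b'+d*d').
Proof.
apply/matrixP => i j; rewrite !mxE !big_ord_recl big_ord0 !mxE.
by case: i => [[|[|i]] Hi]; case: j => [[|[|j]] Hj] //=; rewrite ?addr0.
Qed.

Lemma gmx2Z (T : pzRingType) (k a b c d : T) :
  k *: gmx2 a b c d = gmx2 (k*a) (k*b) (k*c) (k*d).
Proof.
apply/matrixP => i j; rewrite !mxE.
by case: i => [[|[|i]] Hi]; case: j => [[|[|j]] Hj].
Qed.

Lemma gmx2N (T : pzRingType) (a b c d : T) :
  - gmx2 a b c d = gmx2 (-a) (-b) (-c) (-d).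
Proof.
apply/matrixP => i j; rewrite !mxE.
by case: i => [[|[|i]] Hi]; case: j => [[|[|j]] Hj].
Qed.

Lemma gmx2_det (T : comPzRingType) (a b c d : T) :
  \det (gmx2 a b c d) = a * d - b * c.
Proof. rewrite (expand_det_row _ ord0) !big_ord_recl big_ord0 /cofactor !det_mx11 !mxE /bump /=; ring. Qed.

Lemma intmx_gmx2 (R : realType) (a b c d : int) :
  intmx (gmx2 a b c d) = gmx2 (a%:~R : R) b%:~R c%:~R d%:~R.
Proof.
apply/matrixP => i j; rewrite !mxE.
by case: i => [[|[|i]] Hi]; case: j => [[|[|j]] Hj].
Qed.

Lemma intmxM (R : realType) (A B : 'M[int]_2) :
  intmx (A *m B) = (intmx A : 'M[R]_2) *m intmx B.
Proof. apply/matrixP => i j; rewrite !mxE !big_ord_recl !big_ord0 !mxE !addr0 intrD !intrM. done. Qed.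
Lemma gcd_split (a c : int) : a != 0 ->
  exists X u v p q : int, [/\ 0 < X, a = X*u, c = X*v & p*u + q*v = 1].
Proof.
move=> a0.
set X : int := gcdz a c.
have X0 : 0 < X.
  have hX : (gcdz a c != 0 :> int) by rewrite gcdz_eq0 (negbTE a0).
  by rewrite /X lt0r hX /=.
have := divzK (dvdz_gcdl a c); have := divzK (dvdz_gcdr a c).
case: (Bezoutz a c) => P [Q HPQ].
rewrite -/X => Hc Ha.
exists X, (a %/ X)%Z, (c %/ X)%Z, P, Q; split => //.
- by rewrite mulrC Ha.
- by rewrite mulrC Hc.
- have H : P * ((a %/ X)%Z * X) + Q * ((c %/ X)%Z * X) = X by rewrite Ha Hc.
  have : X * (P * (a %/ X)%Z + Q * (c %/ X)%Z) = X * 1.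
    by rewrite mulr1 -[in RHS]H; ring.
  by move/(mulfI (lt0r_neq0 X0)).
Qed.

Lemma dvdz_lin (e x y a b : int) : (e %| x)%Z -> (e %| y)%Z -> (e %| a*x + b*y)%Z.
Proof. by move=> hx hy; apply: rpredD; apply: dvdz_mull. Qed.

Lemma par1 (a b : int) : (2 %| a * b)%Z -> ~~ (2 %| a)%Z -> (2 %| b)%Z.
Proof. nia. Qed.
Lemma par2 (a b : int) : ~~ (2 %| a)%Z -> ~~ (2 %| b)%Z -> ~~ (2 %| a * b)%Z.
Proof. nia. Qed.
Lemma par3 (p q u v : int) : (2 %| v)%Z -> p*u + q*v = 1 -> ~~ (2 %| u)%Z.
Proof. nia. Qed.
Lemma par4 (v : int) : ~~ (2 %| v)%Z -> exists s, 2 * s = v + 1.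
Proof. move=> h; exists ((v + 1) %/ 2)%Z; lia. Qed.
Lemma par5 (x y e : int) : ~~ (2 %| x)%Z -> (e %| x)%Z -> (e %| 2 * y)%Z -> (e %| y)%Z.
Proof.
move=> hx ex ey; have [s hs] := par4 hx.
have -> : y = y * x - (s - 1) * (2 * y).
  by transitivity (y * x - y * (2 * s) + 2 * y); [rewrite hs; ring | ring].
apply: rpredD; first exact: dvdz_mull.
rewrite rpredN; exact: dvdz_mull.
Qed.

Lemma inG_gmx2 (a b c d : int) : a * d - b * c = 1 -> (2 %| c)%Z -> inGamma0_2 (gmx2 a b c d).
Proof. by move=> h1 h2; split; [rewrite gmx2_det | rewrite mxE]. Qed.

Lemma hnf (a b c d X u v p q : int) : 0 < X -> a = X*u -> c = X*v -> p*u+q*v = 1 ->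
  (2 %| v)%Z -> 0 < a*d - b*c ->
  exists Y Z k : int, 0 < Z /\ 0 <= Y /\ Y < Z /\ X*Z = a*d-b*c /\ Z = u*d - v*b /\
   gmx2 a b c d = gmx2 u (u*k-q) v (v*k+p) *m gmx2 X Y 0 Z /\
   inGamma0_2 (gmx2 u (u*k-q) v (v*k+p)) /\
   forall e, (e %| X)%Z -> (e %| Y)%Z -> (e %| Z)%Z ->
     [/\ (e %| a)%Z, (e %| b)%Z, (e%|c)%Z & (e %| d)%Z].
Proof.
move=> X0 Ha Hc Hpq v2 D0.
set Z := u*d - v*b.
have HXZ : X * Z = a*d - b*c by rewrite /Z Ha Hc; ring.
have Z0 : 0 < Z by rewrite -HXZ in D0; nia.
set Y0 := p*b + q*d.
exists (Y0 %% Z)%Z, Z, (Y0 %/ Z)%Z.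
have HY := divz_eq Y0 Z.
set Y := (Y0 %% Z)%Z in HY *; set k := (Y0 %/ Z)%Z in HY *.
have Hb : b = u * Y + (u*k - q) * Z.
  transitivity (b * (p*u + q*v)); first by rewrite Hpq mulr1.
  transitivity (u * (k * Z + Y) - q * Z); last by ring.
  by rewrite -HY /Y0 /Z; ring.
have Hd : d = v * Y + (v*k + p) * Z.
  transitivity (d * (p*u + q*v)); first by rewrite Hpq mulr1.
  transitivity (v * (k * Z + Y) + p * Z); last by ring.
  by rewrite -HY /Y0 /Z; ring.
have hge : 0 <= Y by apply: modz_ge0; apply: lt0r_neq0.
have hlt : Y < Z by exact: ltz_pmod.
have hM : gmx2 a b c d = gmx2 u (u*k-q) v (v*k+p) *m gmx2 X Y 0 Z.
  by rewrite gmx2M; congr gmx2; rewrite ?Ha ?Hc ?Hb ?Hd; ring.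
have hG : inGamma0_2 (gmx2 u (u*k-q) v (v*k+p)).
  apply: inG_gmx2 => //.
  by transitivity (p*u + q*v); [ring | exact Hpq].
have hdv : forall e, (e %| X)%Z -> (e %| Y)%Z -> (e %| Z)%Z ->
     [/\ (e %| a)%Z, (e %| b)%Z, (e%|c)%Z & (e %| d)%Z].
  move=> e eX eY eZ; split.
  + by rewrite Ha dvdz_mulr.
  + by rewrite Hb; apply: dvdz_lin.
  + by rewrite Hc dvdz_mulr.
  + by rewrite Hd; apply: dvdz_lin.
exact: (conj Z0 (conj hge (conj hlt (conj HXZ (conj erefl (conj hM (conj hG hdv))))))).
Qed.

Definition Wi : 'M[int]_2 := gmx2 0 (-1) 2 0.

Lemma w2E (R : realType) : (w2 : 'M[R]_2) = (Num.sqrt (2:R))^-1 *: intmx Wi.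
Proof.
rewrite /w2 /Wi intmx_gmx2; congr (_ *: _).
Qed.

Lemma sqrt2_inv (R : realType) : (Num.sqrt (2:R))^-1 * (Num.sqrt (2:R))^-1 = 2^-1.
Proof. by rewrite -invfM -expr2 sqr_sqrtr // ler0n. Qed.

Lemma utE (R : realType) x y z : (ut x y z : 'M[R]_2) = intmx (gmx2 x%:Z y%:Z 0 z%:Z).
Proof. by rewrite intmx_gmx2. Qed.

Lemma half_intmx (R : realType) (a b c d : int) :
  (2^-1 : R) *: intmx (gmx2 (2*a) (2*b) (2*c) (2*d)) = intmx (gmx2 a b c d).
Proof.
rewrite !intmx_gmx2 gmx2Z; congr gmx2; rewrite intrM mulrA mulVf ?mul1r //;
  by rewrite pnatr_eq0.
Qed.

Lemma R1 (R : realType) (H U : 'M[int]_2) g1 g2 g3 g4 :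
  Wi *m H *m U *m Wi = gmx2 (2*g1) (2*g2) (2*g3) (2*g4) ->
  (intmx (gmx2 g1 g2 g3 g4) : 'M[R]_2) = w2 *m intmx H *m intmx U *m w2.
Proof.
move=> h; rewrite w2E -?scalemxAl -?scalemxAr -?scalemxAl -?scalemxAr ?scalerA ?sqrt2_inv -!intmxM h.
by rewrite half_intmx.
Qed.

Lemma R2 (R : realType) (H U : 'M[int]_2) g1 g2 g3 g4 :
  H *m U *m Wi = gmx2 (2*g1) (2*g2) (2*g3) (2*g4) ->
  (intmx (gmx2 g1 g2 g3 g4) : 'M[R]_2) =
    intmx H *m ((Num.sqrt (2:R))^-1 *: intmx U) *m w2.
Proof.
move=> h; rewrite w2E -scalemxAr -?scalemxAl -?scalemxAr -?scalemxAl -?scalemxAr ?scalerA ?sqrt2_inv -!intmxM h.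
by rewrite half_intmx.
Qed.

Lemma R3 (R : realType) (H U G : 'M[int]_2) :
  U *m Wi = Wi *m H *m G ->
  (intmx U : 'M[R]_2) *m w2 = w2 *m intmx H *m intmx G.
Proof.
move=> h; rewrite w2E -?scalemxAl -?scalemxAr -?scalemxAl -?scalemxAr -!intmxM h //.
Qed.

Lemma R4 (R : realType) (H U G : 'M[int]_2) g1 g2 g3 g4 :
  U *m Wi = gmx2 (2*g1) (2*g2) (2*g3) (2*g4) -> H *m G = gmx2 g1 g2 g3 g4 ->
  ((Num.sqrt (2:R))^-1 *: intmx U) *m w2 = intmx H *m intmx G.
Proof.
move=> h1 h2; rewrite w2E -?scalemxAl -?scalemxAr -?scalemxAl -?scalemxAr ?scalerA ?sqrt2_inv -!intmxM h1 h2.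
by rewrite half_intmx.
Qed.

Lemma oddZ (n : nat) : ~~ (2 %| n%:Z)%Z = odd n.
Proof. by rewrite dvdzE /= dvdn2 negbK. Qed.

Lemma gcd3_int (x y z : nat) : gcd3 x y z = 1%N ->
  forall e : int, (e %| x%:Z)%Z -> (e %| y%:Z)%Z -> (e %| z%:Z)%Z -> (e %| 1)%Z.
Proof.
move=> h e; rewrite !dvdzE /= => ex ey ez.
have : (`|e| %| gcd3 x y z)%N by rewrite /gcd3 !dvdn_gcd ex ey ez.
by rewrite h.
Qed.

Lemma gcd3_of (x y z : nat) :
  (forall e : int, (e %| x%:Z)%Z -> (e %| y%:Z)%Z -> (e %| z%:Z)%Z -> (e %| 1)%Z) ->
  gcd3 x y z = 1%N.
Proof.
move=> h; have := h (gcd3 x y z)%:Z.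
rewrite !dvdzE /= /gcd3 dvdn_gcdr (dvdn_trans (dvdn_gcdl _ _) (dvdn_gcdl _ _))
  (dvdn_trans (dvdn_gcdl _ _) (dvdn_gcdr _ _)).
by move=> /(_ isT isT isT); rewrite dvdn1 => /eqP.
Qed.

Lemma natify (X : int) : 0 <= X -> exists n : nat, X = n%:Z.
Proof. by move=> h; exists `|X|%N; lia. Qed.

Lemma dirM1 (R : realType) m x y z : condM1 m x y z ->
  exists2 gam, inM2 m gam & exists2 h, Gamma0_2plus h & (ut x y z : 'M[R]_2) = h *m gam *m w2.
Proof.
case=> x0 [z0 [hm [yz [hg xo]]]].
have a0 : - (z%:Z) != 0 by lia.
have [X [u [v [p [q [X0 Ha Hc Hpq]]]]]] := gcd_split (2 * y%:Z) a0.
have xo' : ~~ (2 %| x%:Z)%Z by rewrite oddZ.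
have hdiv : forall e : int, (e %| x%:Z)%Z -> (e %| 2 * y%:Z)%Z -> (e %| z%:Z)%Z -> (e %| 1)%Z.
  move=> e ex ey ez; apply: (gcd3_int hg) => //; exact: (par5 xo').
case: (boolP (2 %| v)%Z) => hv.
- have D0 : 0 < (- z%:Z) * (- x%:Z) - 0 * (2 * y%:Z) by nia.
  have [Y [Z [k [Z0 [Y0 [YZ [HXZ [HZ [hM [hG hdv]]]]]]]]]] :=
    hnf X0 Ha Hc Hpq hv D0.
  have [x' Ex] := natify (ltW X0); have [y' Ey] := natify Y0;
    have [z' Ez] := natify (ltW Z0).
  rewrite Ez in HZ; subst X Y Z.
  exists (ut x' y' z'); first left.
    exists x', y', z'; split => //; do 4 (split; first nia); split.
    + apply: gcd3_of => e ex ey ez; have [h1 h2 h3 h4] := hdv e ex ey ez.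
      by apply: hdiv => //; rewrite -rpredN // -rpredN.
    + rewrite -oddZ HZ mulr0 subr0 mulrN rpredN; apply: par2 => //.
      exact: par3 hv Hpq.
  exists (w2 *m intmx (gmx2 u (u * k - q) v (v * k + p))).
    by apply: G2p_mul; [exact: G2p_w2 | exact: G2p_gamma].
  rewrite !utE; apply: R1.
  by rewrite -(mulmxA Wi) -hM /Wi !gmx2M; congr gmx2; ring.
- have [s hs] := par4 hv.
  have Ha' : - (2 * y%:Z) = X * (- v) by rewrite Hc mulrN.
  have Hc' : - (2 * z%:Z) = X * (2 * u) by rewrite mulrCA -Ha; ring.
  have Hpq' : (u * p - q) * (- v) + (p * s) * (2 * u) = 1.
    transitivity (p*u + q*v); last exact: Hpq.
    transitivity (p*u*(2*s) - p*u*v + q*v); first ring.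
    by rewrite hs; ring.
  have hv' : (2 %| 2 * u)%Z by rewrite dvdz_mulr.
  have D0 : 0 < (- (2 * y%:Z)) * 0 - x%:Z * (- (2 * z%:Z)) by nia.
  have [Y [Z [k [Z0 [Y0 [YZ [HXZ [HZ [hM [hG hdv]]]]]]]]]] :=
    hnf X0 Ha' Hc' Hpq' hv' D0.
  have [x' Ex] := natify (ltW X0); have [y' Ey] := natify Y0;
    have [z' Ez] := natify (ltW Z0).
  have Xe : (2 %| X)%Z by apply: (par1 (a := v)) => //; rewrite mulrC -Hc dvdz_mulr.
  rewrite Ez in HZ; subst X Y Z.
  exists ((Num.sqrt (2:R))^-1 *: ut x' y' z'); first right.
    exists x', y', z'; split => //; do 4 (split; first nia); split; last split.
    + apply: gcd3_of => e ex ey ez; have [h1 h2 h3 h4] := hdv e ex ey ez.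
      rewrite rpredN in h1; rewrite rpredN in h3.
      apply: hdiv => //; first exact: (par5 xo').
    + by rewrite -oddZ negbK.
    + by rewrite -oddZ negbK HZ mulr0 sub0r rpredN -mulrA dvdz_mulr.
  eexists; first by apply: G2p_gamma; exact: hG.
  rewrite !utE; apply: R2.
  by rewrite -hM /Wi !gmx2M; congr gmx2; ring.
Qed.

Lemma dirS1 (R : realType) m X Y Z : condS1 m X Y Z ->
  exists2 gam, inM1 m gam & exists2 h, Gamma0_2plus h & (ut X Y Z : 'M[R]_2) *m w2 = h *m gam.
Proof.
case=> X0 [Z0 [hm [YZ [hg Zo]]]].
have a0 : Z%:Z != 0 by lia.
have [X1 [u [v [p [q [X10 Ha Hc Hpq]]]]]] := gcd_split (- (2 * Y%:Z)) a0.
have Zo' : ~~ (2 %| Z%:Z)%Z by rewrite oddZ.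
have X1o : ~~ (2 %| X1)%Z by apply: contra Zo' => h; rewrite Ha dvdz_mulr.
have hv : (2 %| v)%Z.
  by apply: (par1 (a := X1)) => //; rewrite -Hc rpredN; apply: dvdz_mulr; exact: dvdzz.
have D0 : 0 < Z%:Z * X%:Z - 0 * (- (2 * Y%:Z)) by nia.
have [Y1 [Z1 [k [Z10 [Y10 [YZ1 [HXZ [HZ [hM [hG hdv]]]]]]]]]] :=
  hnf X10 Ha Hc Hpq hv D0.
have [x' Ex] := natify (ltW X10); have [y' Ey] := natify Y10;
  have [z' Ez] := natify (ltW Z10).
rewrite Ez in HZ; subst X1 Y1 Z1.
exists (ut x' y' z').
  exists x', y', z'; split => //; do 4 (split; first nia); split.
  + apply: gcd3_of => e ex ey ez; have [h1 h2 h3 h4] := hdv e ex ey ez.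
    rewrite rpredN in h3.
    apply: (gcd3_int hg) => //; exact: (par5 Zo').
  + by rewrite -oddZ.
exists (w2 *m intmx (gmx2 u (u * k - q) v (v * k + p))).
  by apply: G2p_mul; [exact: G2p_w2 | exact: G2p_gamma].
rewrite !utE; apply: R3.
by rewrite -(mulmxA Wi) -hM /Wi !gmx2M; congr gmx2; ring.
Qed.

Lemma dirS2 (R : realType) m X Y Z : condS2 m X Y Z ->
  exists2 gam, inM1 m gam & exists2 h, Gamma0_2plus h &
    ((Num.sqrt (2:R))^-1 *: (ut X Y Z : 'M[R]_2)) *m w2 = h *m gam.
Proof.
case=> X0 [Z0 [hm [YZ [hg [Xe Ze]]]]].
have [X2 EX] : exists X2 : nat, X = (2 * X2)%N.
  by exists X./2; rewrite -{1}(odd_double_half X) (negbTE Xe) add0n -mul2n.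
have XeZ : (2 %| X%:Z)%Z by move: (oddZ X); rewrite (negbTE Xe) => /negbFE.
have ZeZ : (2 %| Z%:Z)%Z by move: (oddZ Z); rewrite (negbTE Ze) => /negbFE.
have Yo : ~~ (2 %| Y%:Z)%Z.
  apply/negP => h; have := gcd3_int hg XeZ h ZeZ.
  by rewrite dvdz1.
have a0 : Y%:Z != 0 by apply: contraNneq Yo => ->; exact: dvdz0.
have [X1 [u [v [p [q [X10 Ha Hc Hpq]]]]]] := gcd_split (Z%:Z) a0.
have X1o : ~~ (2 %| X1)%Z by apply: contra Yo => h; rewrite Ha dvdz_mulr.
have hv : (2 %| v)%Z by apply: (par1 (a := X1)) => //; rewrite -Hc.
subst X.
have D0 : 0 < Y%:Z * 0 - (- X2%:Z) * Z%:Z by nia.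
have [Y1 [Z1 [k [Z10 [Y10 [YZ1 [HXZ [HZ [hM [hG hdv]]]]]]]]]] :=
  hnf X10 Ha Hc Hpq hv D0.
have [x' Ex] := natify (ltW X10); have [y' Ey] := natify Y10;
  have [z' Ez] := natify (ltW Z10).
rewrite Ez in HZ; subst X1 Y1 Z1.
exists (ut x' y' z').
  exists x', y', z'; split => //; do 4 (split; first nia); split.
  + apply: gcd3_of => e ex ey ez; have [h1 h2 h3 h4] := hdv e ex ey ez.
    rewrite rpredN in h2.
    apply: (gcd3_int hg) => //; rewrite PoszM; exact: dvdz_mull.
  + by rewrite -oddZ.
exists (intmx (gmx2 u (u * k - q) v (v * k + p))); first exact: G2p_gamma.
rewrite !utE; apply: (@R4 R _ _ _ _ _ _ _ _ (esym hM)).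
by rewrite /Wi !gmx2M PoszM; congr gmx2; ring.
Qed.

Unset Implicit Arguments.

Theorem lemma2p7 (R : realType) (m : nat) :
  (0 < m)%N -> ~~ odd m ->
  forall g : 'M[R]_2,
    (exists2 gam, inM1 m gam & exists2 h, Gamma0_2plus h & g = h *m gam)
    <->
    (exists2 gam, inM2 m gam & exists2 h, Gamma0_2plus h & g = h *m gam *m w2).
Proof.
move=> m0 me g; split.
- case=> gam [x [y [z [hc ->]]]] [h hG ->].
  have [gam' hgam' [h' hh' E]] := dirM1 R hc.
  exists gam' => //; exists (h *m h'); first exact: G2p_mul.
  by rewrite E !mulmxA.
- case=> gam' [[x [y [z [hc ->]]]] | [x [y [z [hc ->]]]]] [h hG ->].
  + have [gam hgam [h' hh' E]] := dirS1 R hc.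
    exists gam => //; exists (h *m h'); first exact: G2p_mul.
    by rewrite -mulmxA E mulmxA.
  + have [gam hgam [h' hh' E]] := dirS2 R hc.
    exists gam => //; exists (h *m h'); first exact: G2p_mul.
    by rewrite -mulmxA E mulmxA.
Qed.
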